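(* Let $\mathcal L:\mathcal Y\times\mathbb R\to\mathbb R$ be continuously differentiable and $\mu$-strongly convex, and fix $\varepsilon>0$. (1) If $n\ge1$ and $f_1,f_2\in\mathrm{NN}_n$ satisfy $R(f_i)\le R(\mathrm{NN}_n)+\varepsilon$ for $i\in\{1,2\}$, then $D(f_1,f_2)\le\frac8\mu\big(R(\mathrm{NN}_n)-R(\mathrm{NN}_{2n})+\varepsilon\big)$. (2) If $d\ge1$ and $f_1,f_2\in\mathsf{Tree}_d$ satisfy $R(f_i)\le R(\mathsf{Tree}_d)+\varepsilon$ for $i\in\{1,2\}$, then $D(f_1,f_2)\le\frac8\mu\big(R(\mathsf{Tree}_d)-R(\mathsf{Tree}_{2d})+\varepsilon\big)$.
   Context: $P$ is a distribution on $\mathcal X\times\mathcal Y$ with $\mathcal X\subseteq\mathbb R^m$; expectations are over $(x,y)\sim P$. $\mathcal L$ is $\mu$-strongly convex if $\mathcal L(y,p_1)\ge\mathcal L(y,p_2)+\partial_p\mathcal L(y,p_2)(p_1-p_2)+\frac\mu2(p_1-p_2)^2$ for all $y,p_1,p_2$. $R(f)=\mathbb E[\mathcal L(y,f(x))]$, $R(\mathcal F)=\inf_{f\in\mathcal F}R(f)$, $D(f_1,f_2)=\mathbb E[(f_1(x)-f_2(x))^2]$. With $\sigma(t)=\max\{0,t\}$, $\mathrm{NN}_n$ is the class of real-valued functions on $\mathcal X$ computable by a finite directed acyclic graph with at most $n$ internal nodes, each computing $\sigma(\langle w,u\rangle+b)$ of its inputs $u$, with an output node computing an affine combination of the input coordinates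 and internal node values. $\mathsf{Tree}_d$ is the class of predictors computed by axis-aligned regression trees of depth at most $d$: rooted binary trees whose internal nodes are labeled by a coordinate $j\in[m]$ and threshold $t$ (routing $x$ left iff $x_j\le t$) and whose leaves are labeled by constants in $[0,1]$. *)

(* Defs.v *)
From HB Require Import structures.
From mathcomp Require Import all_boot all_order all_algebra.
From mathcomp Require Import all_classical all_reals all_analysis.
Set Implicit Arguments. Unset Strict Implicit. Unset Printing Implicit Defensive.
Import Order.TTheory GRing.Theory Num.Theory.
Local Open Scope classical_set_scope.
Local Open Scope ring_scope.

Section Defs.
Variables (R : realType) (m : nat).

Definition relu (t : R) : R := Num.max 0 t.

(* A ReLU DAG network in topological order.  Internal node i (i = 0,1,...)
   receives weights W i on the m input coordinates, weights V i j on the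
   earlier internal nodes j < i (weight 0 = no edge), and bias b i.
   [nn_vals W V b x t] is the list of the values of nodes 0 .. t-1. *)
Fixpoint nn_vals (W : nat -> 'I_m -> R) (V : nat -> nat -> R) (b : nat -> R)
  (x : 'rV[R]_m) (t : nat) : seq R :=
  match t with
  | 0 => [::]
  | t'.+1 =>
      let s := nn_vals W V b x t' in
      rcons s (relu (\sum_(j < m) W t' j * x ord0 j
                     + \sum_(j < t') V t' j * nth 0 s j + b t'))
  end.

Definition nn_eval (k : nat) (W : nat -> 'I_m -> R) (V : nat -> nat -> R)
  (b : nat -> R) (a : 'I_m -> R) (c : nat -> R) (c0 : R) (x : 'rV[R]_m) : R :=
  \sum_(j < m) a j * x ord0 j + \sum_(i < k) c i * nth 0 (nn_vals W V b x k) i + c0.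

(* NN_n : real functions on Xset computable by a ReLU DAG with <= n internal
   nodes (functions on R^m are identified when they agree on Xset). *)
Definition NN (Xset : set 'rV[R]_m) (n : nat) : set ('rV[R]_m -> R) :=
  [set f | exists k W V b a c c0, (k <= n)%N /\
     forall v, Xset v -> f v = @nn_eval k W V b a c c0 v].

Inductive tree : Type :=
  | Leaf of R
  | Node of 'I_m & R & tree & tree.

Fixpoint tree_depth (t : tree) : nat :=
  match t with
  | Leaf _ => 0
  | Node _ _ l r => (maxn (tree_depth l) (tree_depth r)).+1
  end.

Fixpoint tree_leaves_ok (t : tree) : Prop :=
  match t with
  | Leaf c => 0 <= c <= 1
  | Node _ _ l r => tree_leaves_ok l /\ tree_leaves_ok r
  end.

Fixpoint tree_eval (t : tree) (x : 'rV[R]_m) : R :=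
  match t with
  | Leaf c => c
  | Node j th l r => if x ord0 j <= th then tree_eval l x else tree_eval r x
  end.

Definition Tree (Xset : set 'rV[R]_m) (d : nat) : set ('rV[R]_m -> R) :=
  [set f | exists t, (tree_depth t <= d)%N /\ tree_leaves_ok t /\
     forall v, Xset v -> f v = tree_eval t v].

End Defs.

Section Risk.
Local Open Scope ereal_scope.
Variables (R : realType) (m : nat) (dsp : measure_display) (Omega : measurableType dsp)
  (P : probability Omega R) (Y : Type) (x : Omega -> 'rV[R]_m) (y : Omega -> Y)
  (L : Y -> R -> R).

Definition risk (f : 'rV[R]_m -> R) : \bar R :=
  \int[P]_(w in setT) (L (y w) (f (x w)))%:E.

Definition risk_class (F : set ('rV[R]_m -> R)) : \bar R :=
  ereal_inf [set risk f | f in F].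

Definition dist2 (f1 f2 : 'rV[R]_m -> R) : \bar R :=
  \int[P]_(w in setT) (((f1 (x w) - f2 (x w)) ^+ 2)%R)%:E.
End Risk.

Definition strongly_convex (R : realType) (Y : Type) (L : Y -> R -> R) (mu : R) : Prop :=
  forall yv p1 p2, L yv p2 + derive1 (L yv) p2 * (p1 - p2) + mu / 2 * (p1 - p2) ^+ 2 <= L yv p1.

Definition C1_in_p (R : realType) (Y : Type) (L : Y -> R -> R) : Prop :=
  forall yv, (forall p, derivable (L yv) p 1) /\ continuous (derive1 (L yv) : R^o -> R^o).

(* Main.v *)
Require Import Defs.
From HB Require Import structures.
From mathcomp Require Import all_boot all_order all_algebra.
From mathcomp Require Import all_classical all_reals all_analysis.
From mathcomp Require Import ring lra.
Import Order.TTheory GRing.Theory Num.Theory.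
Local Open Scope classical_set_scope.
Local Open Scope ring_scope.



Lemma ge0_int_mono (d : measure_display) (T : measurableType d) (R : realType)
  (mu : {measure set T -> \bar R}) (F G : T -> \bar R) :
  (forall z, (0 <= F z)%E) -> (forall z, (F z <= G z)%E) ->
  (\int[mu]_z F z <= \int[mu]_z G z)%E.
Proof.
move=> F0 FG.
have G0 : forall z, (0 <= G z)%E by move=> z; exact: le_trans (F0 z) (FG z).
rewrite (ge0_integralTE mu F0) (ge0_integralTE mu G0) /=.
apply: ereal_sup_le => _ [h hF <-]; exists h => //= z.
exact: le_trans (hF z) (FG z).
Qed.

Lemma pt_ineq (R : realType) (Y : Type) (L : Y -> R -> R) (mu : R) yv a b :
  0 < mu -> strongly_convex L mu ->
  (a - b) ^+ 2 <= 4 / mu * (L yv a + L yv b - 2 * L yv ((a + b) / 2)).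
Proof.
move=> mu0 sc.
have h1 := sc yv a ((a + b) / 2).
have h2 := sc yv b ((a + b) / 2).
set c := derive1 (L yv) ((a + b) / 2) in h1 h2.
have H : mu / 4 * (a - b) ^+ 2 <= L yv a + L yv b - 2 * L yv ((a + b) / 2).
  have E : mu / 4 * (a - b) ^+ 2 = mu / 2 * (a - (a + b) / 2) ^+ 2 + mu / 2 * (b - (a + b) / 2) ^+ 2.
    by field.
  rewrite E. 
  have E2 : c * (a - (a + b) / 2) + c * (b - (a + b) / 2) = 0 by field.
  lra.
have -> : (a - b) ^+ 2 = 4 / mu * (mu / 4 * (a - b) ^+ 2).
  by field; rewrite gt_eqF.
by rewrite ler_wpM2l // divr_ge0 // ltW.
Qed.

Lemma e1 {R : realType} (k a b c : R) : (k%:E * (a%:E + b%:E - 2%:E * c%:E))%E = (k * (a + b - 2 * c))%:E.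
Proof. by []. Qed.
Lemma e2 {R : realType} (k a b c : R) : (k%:E * (a%:E - b%:E + c%:E))%E = (k * (a - b + c))%:E.
Proof. by []. Qed.
Lemma e3 {R : realType} (a b : R) : (a%:E + b%:E)%E = (a + b)%:E.
Proof. by []. Qed.
Lemma e4 {R : realType} (a b : R) : (a%:E - -oo%E + b%:E)%E = +oo%E.
Proof. by []. Qed.
Lemma e5 {R : realType} (a b : R) : (+oo%E - a%:E + b%:E)%E = +oo%E.
Proof. by []. Qed.
Lemma e6 {R : realType} (b : R) : (+oo%E - -oo%E + b%:E)%E = +oo%E.
Proof. by []. Qed.
Lemma e7 {R : realType} (b : R) : (+oo%E <= b%:E)%E = false.
Proof. by []. Qed.
Lemma e8 {R : realType} (k : R) : 0 < k -> (k%:E * +oo%E)%E = +oo%E.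
Proof. by move=> k0; rewrite mulry gtr0_sg // mul1e. Qed.

Lemma core (R : realType) (m : nat) (dsp : measure_display)
  (Omega : measurableType dsp) (P : probability Omega R) (Y : Type)
  (x : Omega -> 'rV[R]_m) (y : Omega -> Y)
  (L : Y -> R -> R) (mu eps : R) (F2 : set ('rV[R]_m -> R)) f1 f2 g (Rn : \bar R) :
  0 < mu -> strongly_convex L mu ->
  (forall f, F2 f -> P.-integrable setT (fun w => (L (y w) (f (x w)))%:E)) ->
  F2 f1 -> F2 f2 -> F2 g -> (forall w, g (x w) = (f1 (x w) + f2 (x w)) / 2) ->
  (risk P x y L f1 <= Rn + eps%:E)%E ->
  (risk P x y L f2 <= Rn + eps%:E)%E ->
  (dist2 P x f1 f2 <= (8 / mu)%:E * (Rn - risk_class P x y L F2 + eps%:E))%E.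
Proof.
move=> mu0 sc Hint F1 F2' Fg gE H1 H2.
set A1 := fun w => (L (y w) (f1 (x w)))%:E.
set A2 := fun w => (L (y w) (f2 (x w)))%:E.
set Ag := fun w => (L (y w) (g (x w)))%:E.
have i1 : P.-integrable setT A1 by exact: Hint.
have i2 : P.-integrable setT A2 by exact: Hint.
have ig : P.-integrable setT Ag by exact: Hint.
have i12 : P.-integrable setT (fun w => A1 w + A2 w)%E by exact: integrableD.
have i2g : P.-integrable setT (fun w => 2%:E * Ag w)%E by exact: integrableZl.
have iS : P.-integrable setT (fun w => (A1 w + A2 w) - 2%:E * Ag w)%E.
  exact: integrableB.
have Hd : (dist2 P x f1 f2 <= \int[P]_w ((4 / mu)%:E * ((A1 w + A2 w) - 2%:E * Ag w)))%E.
  apply: ge0_int_mono => z; first by rewrite lee_fin sqr_ge0.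
  rewrite /A1 /A2 /Ag /= gE; have := (@pt_ineq R Y L mu (y z)) (f1 (x z)) (f2 (x z)) mu0 sc; rewrite -lee_fin; exact.
have HI : (\int[P]_w ((4 / mu)%:E * ((A1 w + A2 w) - 2%:E * Ag w)) =
   (4 / mu)%:E * ((risk P x y L f1 + risk P x y L f2) - 2%:E * risk P x y L g))%E.
  rewrite integralZl //.
  rewrite (integralB measurableT i12 i2g) integralD // integralZl //.
have Rg : (risk_class P x y L F2 <= risk P x y L g)%E.
  by apply: ereal_inf_lbound; exists g.
have f1n : risk P x y L f1 \is a fin_num by exact: integrable_fin_num.
have f2n : risk P x y L f2 \is a fin_num by exact: integrable_fin_num.
have fgn : risk P x y L g \is a fin_num by exact: integrable_fin_num.
move: Hd; rewrite HI => Hd; apply: (le_trans Hd) => {Hd HI}.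
move: H1 H2 Rg f1n f2n fgn.
case: (risk P x y L f1) => // r1; case: (risk P x y L f2) => // r2;
case: (risk P x y L g) => // rg.
case: Rn => [rn| |] //.
all: set RC := risk_class _ _ _ _ _.
all: move: RC => RC.
all: have k0 : 0 < 8 / mu by rewrite divr_gt0.
all: case: RC => [r| |].
- rewrite e1 e2 !e3 !lee_fin => h1 h2 h3 _ _ _.
  have -> : 8 / mu = 2 * (4 / mu) by field; rewrite gt_eqF.
  have k4 : 0 < 4 / mu by rewrite divr_gt0.
  have key : r1 + r2 - 2 * rg <= 2 * (rn - r + eps) by lra.
  have := ler_wpM2l (ltW k4) key; lra.
- by rewrite e7.
- by rewrite (e4 rn eps) (e8 (8 / mu) k0) leey.
- by move=> *; rewrite (_ : (+oo - r%:E + eps%:E)%E = +oo%E) // (e8 (8 / mu) k0) leey.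
- by rewrite e7.
- by move=> *; rewrite (_ : (+oo - -oo + eps%:E)%E = +oo%E) // (e8 (8 / mu) k0) leey.
Qed.

Section Trees.
Variables (R : realType) (m : nat).

Fixpoint map_leaves (f : R -> R) (t : tree R m) : tree R m :=
  match t with
  | Leaf c => Leaf m (f c)
  | Node j th l r => Node j th (map_leaves f l) (map_leaves f r)
  end.

Fixpoint graft (t1 t2 : tree R m) : tree R m :=
  match t1 with
  | Leaf c => map_leaves (fun c' => (c + c') / 2) t2
  | Node j th l r => Node j th (graft l t2) (graft r t2)
  end.

Lemma depth_map f t : tree_depth (map_leaves f t) = tree_depth t.
Proof. by elim: t => //= j th l -> r ->. Qed.

Lemma depth_graft t1 t2 : (tree_depth (graft t1 t2) <= tree_depth t1 + tree_depth t2)%N.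
Proof.
elim: t1 => [c|j th l IHl r IHr] /=; first by rewrite depth_map.
rewrite addSn ltnS geq_max (leq_trans IHl) ?(leq_trans IHr) // leq_add2r ?leq_maxl ?leq_maxr //.
Qed.

Lemma ok_map (f : R -> R) t : (forall c, 0 <= c <= 1 -> 0 <= f c <= 1) ->
  tree_leaves_ok t -> tree_leaves_ok (map_leaves f t).
Proof. by move=> Hf; elim: t => [c|j th l IHl r IHr] /=; [apply: Hf | case=> /IHl ? /IHr ?]. Qed.

Lemma ok_graft t1 t2 : tree_leaves_ok t1 -> tree_leaves_ok t2 ->
  tree_leaves_ok (graft t1 t2).
Proof.
move=> h1 h2; elim: t1 h1 => [c|j th l IHl r IHr] /=.
  move=> /andP[c0 c1]; apply: ok_map => // c' /andP[d0 d1].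
  apply/andP; split; lra.
by case=> /IHl ? /IHr ?.
Qed.

Lemma eval_map f t v : tree_eval (map_leaves f t) v = f (tree_eval t v).
Proof. by elim: t => [c|j th l IHl r IHr] //=; rewrite IHl IHr; case: ifP. Qed.

Lemma eval_graft t1 t2 v :
  tree_eval (graft t1 t2) v = (tree_eval t1 v + tree_eval t2 v) / 2.
Proof.
elim: t1 => [c|j th l IHl r IHr] /=; first by rewrite eval_map.
by rewrite IHl IHr; case: ifP.
Qed.

Lemma Tree_mid (Xset : set 'rV[R]_m) d f1 f2 :
  Tree Xset d f1 -> Tree Xset d f2 ->
  Tree Xset (2 * d) (fun v => (f1 v + f2 v) / 2).
Proof.
move=> [t1 [hd1 [ho1 he1]]] [t2 [hd2 [ho2 he2]]]; exists (graft t1 t2); split.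
  apply: (leq_trans (depth_graft _ _)); rewrite mul2n -addnn; exact: leq_add.
split; first exact: ok_graft.
by move=> v Xv; rewrite eval_graft he1 ?he2.
Qed.

Lemma Tree_mono (Xset : set 'rV[R]_m) d f : Tree Xset d f -> Tree Xset (2 * d) f.
Proof.
move=> [t [dt rest]]; exists t; split => //.
by apply: (leq_trans dt); rewrite mul2n -addnn leq_addr.
Qed.
End Trees.

Section NNs.
Variables (R : realType) (m : nat).

Lemma size_vals W V b v t : size (@nn_vals R m W V b v t) = t.
Proof. by elim: t => //= t IH; rewrite size_rcons IH. Qed.

Variables (k1 : nat) (W1 W2 : nat -> 'I_m -> R) (V1 V2 : nat -> nat -> R) (b1 b2 : nat -> R).

Definition Wc i := if (i < k1)%N then W1 i else W2 (i - k1)%N.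
Definition Vc i j := if (i < k1)%N then V1 i j
  else if (j < k1)%N then 0 else V2 (i - k1)%N (j - k1)%N.
Definition bc i := if (i < k1)%N then b1 i else b2 (i - k1)%N.

Lemma vals_lo v t : (t <= k1)%N -> nn_vals Wc Vc bc v t = nn_vals W1 V1 b1 v t.
Proof.
elim: t => //= t IH ht.
rewrite IH; last exact: ltnW.
rewrite /Wc /Vc /bc ht.
reflexivity.
Qed.

Lemma vals_hi v t : nn_vals Wc Vc bc v (k1 + t) =
  nn_vals W1 V1 b1 v k1 ++ nn_vals W2 V2 b2 v t.
Proof.
elim: t => [|t IH]; first by rewrite addn0 cats0 vals_lo.
rewrite addnS /= IH -rcons_cat.
have hk : (k1 + t < k1)%N = false by rewrite ltnNge leq_addr.
rewrite /Wc /bc hk addKn.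
have S : \sum_(j < k1 + t) Vc (k1 + t) j *
    nth 0 (nn_vals W1 V1 b1 v k1 ++ nn_vals W2 V2 b2 v t) j =
  \sum_(j < t) V2 t j * nth 0 (nn_vals W2 V2 b2 v t) j.
  rewrite big_split_ord big1; last first.
    move=> j _; rewrite /Vc hk /=.
    rewrite ltn_ord mul0r; reflexivity.
  rewrite /= add0r; apply: eq_bigr => j _.
  rewrite /Vc hk /=.
  have hj : (k1 + j < k1)%N = false by rewrite ltnNge leq_addr.
  rewrite hj !addKn nth_cat size_vals hj addKn.
  reflexivity.
rewrite S.
reflexivity.
Qed.
End NNs.
Lemma NN_mid (R : realType) (m : nat) (Xset : set 'rV[R]_m) n f1 f2 :
  NN Xset n f1 -> NN Xset n f2 ->
  NN Xset (2 * n) (fun v => (f1 v + f2 v) / 2).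
Proof.
move=> [k1 [W1 [V1 [b1 [a1 [c1 [c01 [hk1 he1]]]]]]]].
move=> [k2 [W2 [V2 [b2 [a2 [c2 [c02 [hk2 he2]]]]]]]].

exists (k1 + k2)%N, (@Wc R m k1 W1 W2), (@Vc R k1 V1 V2), (@bc R k1 b1 b2),
  (fun j => (a1 j + a2 j) / 2),
  (fun i => if (i < k1)%N then c1 i / 2 else c2 (i - k1)%N / 2), ((c01 + c02) / 2).
split; first by rewrite mul2n -addnn leq_add.
move=> v Xv; rewrite he1; last exact: Xv.
rewrite he2; last exact: Xv.
rewrite /nn_eval vals_hi.
rewrite big_split_ord /=.
have -> : \sum_(i < k1) (if (i < k1)%N then c1 i / 2 else c2 (i - k1)%N / 2) *
     nth 0 (nn_vals W1 V1 b1 v k1 ++ nn_vals W2 V2 b2 v k2) i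
   = (\sum_(i < k1) c1 i * nth 0 (nn_vals W1 V1 b1 v k1) i) / 2.
  rewrite mulr_suml; apply: eq_bigr => i _.
  rewrite ltn_ord nth_cat size_vals ltn_ord; by field.
have -> : \sum_(i < k2) (if (k1 + i < k1)%N then c1 (k1 + i)%N / 2
      else c2 (k1 + i - k1)%N / 2) *
     nth 0 (nn_vals W1 V1 b1 v k1 ++ nn_vals W2 V2 b2 v k2) (k1 + i)
   = (\sum_(i < k2) c2 i * nth 0 (nn_vals W2 V2 b2 v k2) i) / 2.
  rewrite mulr_suml; apply: eq_bigr => i _.
  have hi : (k1 + i < k1)%N = false by rewrite ltnNge leq_addr.
  rewrite hi addKn nth_cat size_vals hi addKn; by field.
have -> : \sum_(j < m) (a1 j + a2 j) / 2 * v ord0 j =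
   (\sum_(j < m) a1 j * v ord0 j) / 2 + (\sum_(j < m) a2 j * v ord0 j) / 2.
  rewrite !mulr_suml -big_split; apply: eq_bigr => j _ /=; by field.
set A1 := \sum_(j < m) _.
set A2 := \sum_(j < m) _.
set C1 := \sum_(i < k1) _.
set C2 := \sum_(i < k2) _.
lra.
Qed.

Lemma NN_mono (R : realType) (m : nat) (Xset : set 'rV[R]_m) n f :
  NN Xset n f -> NN Xset (2 * n) f.
Proof.
move=> [k [W [V [b [a [c [c0 [hk he]]]]]]]].
exists k, W, V, b, a, c, c0; split; last exact: he.
by apply: (leq_trans hk); rewrite mul2n -addnn leq_addr.
Qed.

Theorem theorem7 (R : realType) (m : nat) (dsp : measure_display)
  (Omega : measurableType dsp) (P : probability Omega R) (Y : Type)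
  (Xset : set 'rV[R]_m) (x : Omega -> 'rV[R]_m) (y : Omega -> Y)
  (L : Y -> R -> R) (mu eps : R) :
  (forall w, Xset (x w)) ->
  (forall j : 'I_m, measurable_fun setT (fun w => x w ord0 j)) ->
  C1_in_p L -> 0 < mu -> strongly_convex L mu -> 0 < eps ->
  (forall (n : nat) (f1 f2 : 'rV[R]_m -> R), (1 <= n)%N ->
     (forall f, NN Xset (2 * n) f ->
        P.-integrable setT (fun w => (L (y w) (f (x w)))%:E)) ->
     NN Xset n f1 -> NN Xset n f2 ->
     (risk P x y L f1 <= risk_class P x y L (NN Xset n) + eps%:E)%E ->
     (risk P x y L f2 <= risk_class P x y L (NN Xset n) + eps%:E)%E ->
     (dist2 P x f1 f2 <= (8 / mu)%:E *
        (risk_class P x y L (NN Xset n) - risk_class P x y L (NN Xset (2 * n))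
         + eps%:E))%E) /\
  (forall (d : nat) (f1 f2 : 'rV[R]_m -> R), (1 <= d)%N ->
     (forall f, Tree Xset (2 * d) f ->
        P.-integrable setT (fun w => (L (y w) (f (x w)))%:E)) ->
     Tree Xset d f1 -> Tree Xset d f2 ->
     (risk P x y L f1 <= risk_class P x y L (Tree Xset d) + eps%:E)%E ->
     (risk P x y L f2 <= risk_class P x y L (Tree Xset d) + eps%:E)%E ->
     (dist2 P x f1 f2 <= (8 / mu)%:E *
        (risk_class P x y L (Tree Xset d) - risk_class P x y L (Tree Xset (2 * d))
         + eps%:E))%E).
Proof.
move=> Xx mx C1 mu0 sc eps0; split.
- move=> n f1 f2 n1 Hint N1 N2 H1 H2.
  apply: (@core _ _ _ _ P _ x y L mu eps (NN Xset (2 * n)) f1 f2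
     (fun v => (f1 v + f2 v) / 2) _ mu0 sc Hint) => //.
  + exact: NN_mono.
  + exact: NN_mono.
  + exact: NN_mid.
- move=> n f1 f2 n1 Hint N1 N2 H1 H2.
  apply: (@core _ _ _ _ P _ x y L mu eps (Tree Xset (2 * n)) f1 f2
     (fun v => (f1 v + f2 v) / 2) _ mu0 sc Hint) => //.
  + exact: Tree_mono.
  + exact: Tree_mono.
  + exact: Tree_mid.
Qed.
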